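(* Let $(X,Y)$ be a random pair with $X\in\mathbb{R}^d$ and $Y\in\{+1,-1\}$ with arbitrary joint distribution, and let $p_1(x)=\Pr(Y=+1\mid X=x)$. Let $\alpha\in[0,1)$ and let $\varphi$ be one of the losses $\varphi_{\mathrm{LR}},\varphi_{\mathrm{LS},\alpha},\varphi_{\mathrm{MLS},\alpha},\varphi_{\mathrm{LSQ}}$, with $\phi(v,y)=\varphi(yv)$. Let $\bar g\in\operatorname{argmin}_{g:\mathbb{R}^d\to\mathbb{R}}\mathbb{E}[\phi(g(X),Y)]$. Then $\frac{1}{1+e^{-\bar g(x)}}=p_1(x)$ for almost every $x$ (with respect to the distribution of $X$) when $\varphi\in\{\varphi_{\mathrm{LR}},\varphi_{\mathrm{MLS},\alpha},\varphi_{\mathrm{LSQ}}\}$, and $s_\alpha^{-1}\big(\frac{1}{1+e^{-\bar g(x)}}\big)=p_1(x)$ for almost every $x$ when $\varphi=\varphi_{\mathrm{LS},\alpha}$.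
   Context: The losses are: $\varphi_{\mathrm{LR}}(v)=-\ln\frac{1}{1+e^{-v}}$; $\varphi_{\mathrm{LS},\alpha}(v)=-(1-\frac{\alpha}{2})\ln\frac{1}{1+e^{-v}}-\frac{\alpha}{2}\ln\frac{1}{1+e^{v}}$; $\varphi_{\mathrm{MLS},\alpha}(v)=-(1-\frac{\alpha}{2})\ln\big(\frac{1-\alpha}{1+e^{-v}}+\frac{\alpha}{2}\big)-\frac{\alpha}{2}\ln\big(\frac{1-\alpha}{1+e^{v}}+\frac{\alpha}{2}\big)$; $\varphi_{\mathrm{LSQ}}(v)=\frac{1}{2(1+e^{v})^2}$. Here $s_\alpha(u)=(1-\alpha)u+\frac{\alpha}{2}$ and $s_\alpha^{-1}(u)=(u-\frac{\alpha}{2})/(1-\alpha)$. The minimization is over measurable functions $g$. *)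

(* Defs.v *)
From HB Require Import structures.
From mathcomp Require Import all_boot all_order all_algebra.
From mathcomp Require Import all_classical all_reals all_analysis.
Set Implicit Arguments. Unset Strict Implicit. Unset Printing Implicit Defensive.
Import Order.TTheory GRing.Theory Num.Theory.
Local Open Scope ring_scope.

Section Losses.
Variable R : realType.

Definition sigmoid (v : R) : R := 1 / (1 + expR (- v)).

Definition phi_LR (v : R) : R := - ln (1 / (1 + expR (- v))).

Definition phi_LS (alpha v : R) : R :=
  - (1 - alpha / 2) * ln (1 / (1 + expR (- v)))
  - alpha / 2 * ln (1 / (1 + expR v)).

Definition phi_MLS (alpha v : R) : R :=
  - (1 - alpha / 2) * ln ((1 - alpha) / (1 + expR (- v)) + alpha / 2)
  - alpha / 2 * ln ((1 - alpha) / (1 + expR v) + alpha / 2).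

Definition phi_LSQ (v : R) : R := 1 / (2 * (1 + expR v) ^+ 2).

Definition s_alpha (alpha u : R) : R := (1 - alpha) * u + alpha / 2.
Definition s_alpha_inv (alpha u : R) : R := (u - alpha / 2) / (1 - alpha).

End Losses.

Inductive loss_kind := LR | LS | MLS | LSQ.

Definition loss (R : realType) (alpha : R) (k : loss_kind) : R -> R :=
  match k with
  | LR => @phi_LR R
  | LS => phi_LS alpha
  | MLS => phi_MLS alpha
  | LSQ => @phi_LSQ R
  end.

Definition recovered (R : realType) (alpha : R) (k : loss_kind) (v : R) : R :=
  match k with
  | LS => s_alpha_inv alpha (sigmoid v)
  | _ => sigmoid v
  end.

(* Main.v *)
Require Import Defs.
From HB Require Import structures.
From mathcomp Require Import all_boot all_order all_algebra.
From mathcomp Require Import all_classical all_reals all_analysis.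
From mathcomp Require Import measurable_realfun ring lra.
Import Order.TTheory GRing.Theory Num.Theory.
Local Open Scope classical_set_scope.
Local Open Scope ring_scope.

Module Helpers.
Set Implicit Arguments. Unset Strict Implicit. Unset Printing Implicit Defensive.
Section dens.
Local Open Scope ereal_scope.
Context d1 d2 (Om : measurableType d1) (T : measurableType d2) (R : realType).
Variables (P : {measure set Om -> \bar R}) (mu : {measure set T -> \bar R}).
Variables (X : Om -> T) (mX : measurable_fun [set: Om] X) (E : set Om) (mE : measurable E).
Variables (g : T -> R) (mg : measurable_fun [set: T] g) (g0 : forall x, (0 <= g x)%R).
Hypothesis H : forall A, measurable A -> P (X @^-1` A `&` E) = \int[mu]_(x in A) (g x)%:E.

Import HBNNSimple.

Lemma dens (f : T -> \bar R) : measurable_fun [set: T] f -> (forall x, 0 <= f x) ->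
  \int[P]_(w in E) f (X w) = \int[mu]_x (f x * (g x)%:E).
Proof.
move=> mf f0.
pose h := nnsfun_approx measurableT mf.
have mXA A : measurable A -> measurable (X @^-1` A).
  by move=> mA; rewrite -(setTI (_ @^-1` _)); exact: mX.
transitivity (limn (fun n => \int[P]_(w in E) (h n (X w))%:E)).
  rewrite -monotone_convergence//; last 3 first.
  - by move=> n /=; apply/measurable_EFinP/measurable_funTS/measurableT_comp.
  - by move=> n x _ /=; rewrite lee_fin.
  - by move=> x _ a b ab; rewrite lee_fin; exact/lefP/nd_nnsfun_approx.
  apply: eq_integral => x _ /=; apply/esym/cvg_lim => //.
  exact: (@cvg_nnsfun_approx _ _ _ _ measurableT f mf (fun y _ => f0 y)).
transitivity (limn (fun n => \int[mu]_x ((h n x)%:E * (g x)%:E))); last first.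
  rewrite -monotone_convergence//; last 3 first.
  - by move=> n /=; apply: emeasurable_funM; apply/measurable_EFinP.
  - by move=> n x _ /=; rewrite mule_ge0 ?lee_fin.
  - by move=> x _ a b ab; rewrite lee_wpmul2r ?lee_fin//; exact/lefP/nd_nnsfun_approx.
  apply: eq_integral => x _ /=; apply/cvg_lim => //.
  apply: cvgeZr => //.
  exact: (@cvg_nnsfun_approx _ _ _ _ measurableT f mf (fun y _ => f0 y)).
suff suf n : \int[P]_(w in E) (h n (X w))%:E = \int[mu]_x ((h n x)%:E * (g x)%:E).
  by under eq_fun do rewrite suf.
have mhr r : measurable (h n @^-1` [set r]).
  by rewrite -(setTI (_ @^-1` _)); exact: measurable_funP.
transitivity (\sum_(k \in range (h n))
    \int[P]_(w in E) (k * \1_(X @^-1` (h n @^-1` [set k])) w)%:E).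
  under eq_integral do rewrite fimfunE -fsumEFin//.
  rewrite ge0_integral_fsum//; last 2 first.
  - by move=> y; apply/measurable_EFinP/measurable_funM => //; exact: measurable_indic (mXA _ (mhr _)).
  - by move=> y x _; rewrite nnfun_muleindic_ge0.
transitivity (\sum_(k \in range (h n))
    \int[mu]_x ((k * \1_(h n @^-1` [set k]) x)%:E * (g x)%:E)); last first.
  rewrite -ge0_integral_fsum//; last 2 first.
  - by move=> y; apply: emeasurable_funM; apply/measurable_EFinP => //;
      apply/measurable_funM => //; exact: measurable_indic (mhr _).
  - by move=> y x _; apply: mule_ge0; [rewrite EFinM; exact: nnfun_muleindic_ge0 | rewrite lee_fin].
  apply: eq_integral => x _; rewrite -ge0_mule_fsuml; last first.
    by move=> y; rewrite EFinM nnfun_muleindic_ge0.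
  by rewrite fsumEFin// -fimfunE.
apply: eq_fsbigr => r /[1!inE] -[t _ <-].
rewrite (integralZl_indic _ (fun r => X @^-1` (h n @^-1` [set r])))//; last 2 first.
  by move=> r0; rewrite preimage_nnfun0// preimage_set0.
  exact: mXA.
rewrite integral_indic//; last exact: mXA.
under eq_integral do rewrite EFinM -muleA.
rewrite ge0_integralZl//; last 2 first.
- by move=> x _; rewrite mule_ge0 ?lee_fin.
- by rewrite lee_fin.
congr (_ * _); rewrite H//.
rewrite integral_mkcond; apply: eq_integral => x _.
by rewrite epatch_indic /= muleC.
by apply: emeasurable_funM; apply/measurable_EFinP => //; exact: measurable_indic (mhr _).
Qed.

End dens.

Section pointwise.
Variable R : realType.
Implicit Types (a p q u v w m : R).

Lemma onepE_gt0 v : 0 < 1 + expR v :> R.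
Proof. by rewrite addr_gt0 ?expR_gt0. Qed.

Lemma sig_gt0 v : 0 < sigmoid v.
Proof. by rewrite /sigmoid divr_gt0 ?onepE_gt0. Qed.

Lemma sig_lt1 v : sigmoid v < 1.
Proof.
rewrite /sigmoid ltr_pdivrMr ?onepE_gt0// mul1r.
by rewrite ltrDl expR_gt0.
Qed.

Lemma sigN v : 1 / (1 + expR v) = 1 - sigmoid v.
Proof.
rewrite /sigmoid expRN.
have e0 : expR v != 0 by rewrite gt_eqF ?expR_gt0.
have e1 : 1 + expR v != 0 by rewrite gt_eqF ?onepE_gt0.
have e2 : 1 + (expR v)^-1 != 0 by rewrite gt_eqF// addr_gt0// invr_gt0 expR_gt0.
by field; rewrite e0 addrC e1.
Qed.

Lemma sig_opp v : sigmoid (- v) = 1 - sigmoid v.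
Proof. by rewrite -sigN /sigmoid opprK. Qed.

Lemma sig_nd : {homo (@sigmoid R) : x y / x <= y}.
Proof.
move=> x y xy; rewrite /sigmoid !div1r lef_pV2 ?posrE ?onepE_gt0//.
by rewrite lerD2l ler_expR lerN2.
Qed.

Definition logit m : R := ln m - ln (1 - m).

Lemma sig_logit m : 0 < m < 1 -> sigmoid (logit m) = m.
Proof.
move=> /andP[m0 m1].
have m1' : 0 < 1 - m by rewrite subr_gt0.
rewrite /sigmoid /logit opprB expRD expRN !lnK ?posrE//.
have e0 : m != 0 by rewrite gt_eqF.
have e1 : 1 - m != 0 by rewrite gt_eqF.
by field; rewrite e0 addrC subrK oner_neq0.
Qed.

Definition H q w : R := - q * ln w - (1 - q) * ln (1 - w).

Lemma ln_sub_le (x y : R) : 0 < x -> 0 < y -> ln x - ln y <= x / y - 1.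
Proof.
move=> x0 y0.
have h : -1 < x / y - 1.
  have : 0 < x / y by rewrite divr_gt0.
  lra.
have := le_ln1Dx h.
rewrite addrC subrK lnM ?posrE ?invr_gt0// lnV ?posrE//.
Qed.

Lemma H_improve q w : 0 <= q <= 1 -> 0 < w < 1 ->
  let m := (w + q) / 2 in
  H q m <= H q w /\ (w != q -> H q m < H q w).
Proof.
move=> /andP[q0 q1] /andP[w0 w1] m.
have m0 : 0 < m by rewrite /m divr_gt0 //; lra.
have m1 : 0 < 1 - m by rewrite /m; lra.
have w1' : 0 < 1 - w by lra.
have hA := ln_sub_le w0 m0.
have hB := ln_sub_le w1' m1.
have hqA : q * (ln w - ln m) <= q * (w / m - 1) by rewrite ler_wpM2l.
have hqB : (1 - q) * (ln (1 - w) - ln (1 - m)) <= (1 - q) * ((1 - w) / (1 - m) - 1).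
  by rewrite ler_wpM2l// subr_ge0.
have key : q * (w / m - 1) + (1 - q) * ((1 - w) / (1 - m) - 1) =
   - ((w - q) ^+ 2 / (4 * m * (1 - m))).
  rewrite /m; field.
  apply/andP; split; apply/eqP; lra.
have pos : 0 <= (w - q) ^+ 2 / (4 * m * (1 - m)).
  apply: divr_ge0; first by rewrite sqr_ge0.
  by apply: ltW; apply: mulr_gt0 => //; apply: mulr_gt0.
rewrite /H; split.
  lra.
move=> wq.
have pos' : 0 < (w - q) ^+ 2 / (4 * m * (1 - m)).
  apply: divr_gt0; first by rewrite lt_def sqr_ge0 andbT sqrf_eq0 subr_eq0.
  by apply: mulr_gt0 => //; apply: mulr_gt0.
lra.
Qed.


Section losses.
Variables (a : R).
Hypothesis ha : 0 <= a < 1.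

Definition Lk k u : R := match k with
  | LR => - ln u
  | LS => - (1 - a / 2) * ln u - a / 2 * ln (1 - u)
  | MLS => - (1 - a / 2) * ln (s_alpha a u) - a / 2 * ln (s_alpha a (1 - u))
  | LSQ => (1 - u) ^+ 2 / 2
  end.

Lemma loss_sig k v : loss a k v = Lk k (sigmoid v).
Proof.
case: k => /=.
- by rewrite /phi_LR.
- by rewrite /phi_LS (sigN v).
- by rewrite /phi_MLS /s_alpha -(sigN v) /sigmoid !div1r.
- rewrite /phi_LSQ -sigN.
  have e : 1 + expR v != 0 by rewrite gt_eqF ?onepE_gt0.
  by field; rewrite addrC.
Qed.

Lemma loss_sigN k v : loss a k (- v) = Lk k (1 - sigmoid v).
Proof. by rewrite loss_sig sig_opp. Qed.

Definition target k p := if k is LS then s_alpha a p else p.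

Definition Kf k p u := p * Lk k u + (1 - p) * Lk k (1 - u).

Lemma Lk_ge0 k u : 0 < u < 1 -> 0 <= Lk k u.
Proof.
case/andP: ha => a0 a1 /andP[u0 u1].
have lnu : ln u <= 0 by rewrite ln_le0// ltW.
have ln1u : ln (1 - u) <= 0 by rewrite ln_le0// lerBlDr lerDl ltW.
case: k => /=.
- lra.
- have h1 : 0 <= (1 - a / 2) * - ln u by rewrite mulr_ge0//; lra.
  have h2 : 0 <= a / 2 * - ln (1 - u) by rewrite mulr_ge0//; lra.
  lra.
- have s1 : ln (s_alpha a u) <= 0.
    by rewrite ln_le0// /s_alpha; nra.
  have s2 : ln (s_alpha a (1 - u)) <= 0.
    by rewrite ln_le0// /s_alpha; nra.
  have h1 : 0 <= (1 - a / 2) * - ln (s_alpha a u) by rewrite mulr_ge0//; lra.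
  have h2 : 0 <= a / 2 * - ln (s_alpha a (1 - u)) by rewrite mulr_ge0//; lra.
  lra.
- by rewrite divr_ge0// sqr_ge0.
Qed.

Definition mid k p u := (u + target k p) / 2.

Lemma K_improve k p u : 0 <= p <= 1 -> 0 < u < 1 ->
  [/\ 0 < mid k p u < 1, Kf k p (mid k p u) <= Kf k p u &
  (u != target k p -> Kf k p (mid k p u) < Kf k p u)].
Proof.
move=> hp hu; case/andP: ha => a0 a1; case/andP: hp => p0 p1; case/andP: (hu) => u0 u1.
have hq : 0 <= s_alpha a p <= 1 by rewrite /s_alpha; apply/andP; split; nra.
have ht : 0 <= target k p <= 1 by case: k => //=; rewrite p0 p1.
have hm : 0 < mid k p u < 1 by rewrite /mid; move: ht => /andP[t0 t1]; apply/andP; split; lra.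
suff : Kf k p (mid k p u) <= Kf k p u /\ (u != target k p -> Kf k p (mid k p u) < Kf k p u) by case.
rewrite /mid; case: k hm ht => /= hm ht.
- have [h1 h2] := H_improve ht hu.
  have E (x : R) : Kf LR p x = H p x.
    rewrite /Kf /H /=. rewrite -!mulNr. ring.
  by rewrite !E.
- have [h1 h2] := H_improve ht hu.
  have E (x : R) : Kf LS p x = H (s_alpha a p) x.
    have e : 1 - (1 - x) = x by ring.
    by rewrite /Kf /H /= e /s_alpha; field.
  by rewrite !E.
- have su : 0 < s_alpha a u < 1 by rewrite /s_alpha; apply/andP; split; nra.
  have [h1 h2] := H_improve hq su.
  have sK x : s_alpha a (1 - x) = 1 - s_alpha a x by rewrite /s_alpha; field.
  have E (x : R) : Kf MLS p x = H (s_alpha a p) (s_alpha a x).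
    have e : 1 - (1 - x) = x by ring.
    by rewrite /Kf /H /= e sK /s_alpha; field.
  have Em : s_alpha a ((u + p) / 2) = (s_alpha a u + s_alpha a p) / 2.
    by rewrite /s_alpha; field.
  rewrite !E Em; split => // up; apply: h2.
  apply: contra up => /eqP; rewrite /s_alpha => h.
  have a1' : 1 - a != 0 by apply/eqP; lra.
  apply/eqP; apply: (mulfI a1'); lra.
- have E (x : R) : Kf LSQ p x = (x - p) ^+ 2 / 2 + p * (1 - p) / 2.
    by rewrite /Kf /=; field.
  rewrite !E; split.
    have : 0 <= (u - p) ^+ 2 by rewrite sqr_ge0.
    nra.
  move=> up.
  have : 0 < (u - p) ^+ 2 by rewrite lt_def sqr_ge0 andbT sqrf_eq0 subr_eq0.
  nra.
Qed.

Lemma recovered_eq k v p : (recovered a k v == p) = (sigmoid v == target k p).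
Proof.
case: k => //=.
rewrite /s_alpha_inv /s_alpha.
case/andP: ha => a0 a1.
have a1' : 1 - a != 0 by apply/eqP; lra.
apply/eqP/eqP => h.
  by rewrite -h; field.
by rewrite h; field.
Qed.

End losses.

End pointwise.
Lemma mLk (R : realType) (a : R) k : measurable_fun [set: R] (Lk a k).
Proof.
have mln1 : measurable_fun [set: R] (fun u : R => ln (1 - u)).
  by apply: measurableT_comp => //; apply: measurable_funB.
case: k => /=.
- exact: measurable_funN.
- apply: measurable_funB; apply: measurable_funM => //.
- have ms : measurable_fun [set: R] (fun u => ln (s_alpha a u)).
    by apply: measurableT_comp => //; rewrite /s_alpha; apply: measurable_funD => //.
  have ms1 : measurable_fun [set: R] (fun u => ln (s_alpha a (1 - u))).
    apply: measurableT_comp => //; rewrite /s_alpha; apply: measurable_funD => //.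
    try (apply: measurable_funM => //); try (apply: measurable_funB => //).
  by apply: measurable_funB; apply: measurable_funM.
- apply: measurable_funM => //; apply: measurable_funX; exact: measurable_funB.
Qed.

Lemma mloss (R : realType) (a : R) k : measurable_fun [set: R] (loss a k).
Proof.
rewrite (_ : loss a k = Lk a k \o @sigmoid R); last by apply/funext => v; rewrite /= loss_sig.
apply: measurableT_comp; first exact: mLk.
exact: nondecreasing_measurable (@sig_nd R).
Qed.

Lemma mKf d (T : measurableType d) (R : realType) (a : R) k (f1 f2 : T -> R) :
  measurable_fun [set: T] f1 -> measurable_fun [set: T] f2 ->
  measurable_fun [set: T] (fun x => Kf a k (f1 x) (f2 x)).
Proof.
move=> m1 m2; rewrite /Kf.
apply: measurable_funD; apply: measurable_funM => //.
- exact: measurableT_comp (mLk a k) m2.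
- exact: measurable_funB.
- by apply: measurableT_comp (mLk a k) _; exact: measurable_funB.
Qed.

Lemma Kf_ge0 (R : realType) (a : R) k p u : 0 <= a < 1 -> 0 <= p <= 1 -> 0 < u < 1 ->
  0 <= Kf a k p u.
Proof.
move=> ha /andP[p0 p1] hu; rewrite /Kf.
have h1 := Lk_ge0 ha k hu.
have hu' : 0 < 1 - u < 1 by case/andP: hu => u0 u1; apply/andP; split; lra.
have h2 := Lk_ge0 ha k hu'.
by rewrite addr_ge0// mulr_ge0// subr_ge0.
Qed.

Lemma Kf_le (R : realType) (a : R) k p u : 0 <= a < 1 -> 0 <= p <= 1 -> 0 < u < 1 ->
  Kf a k p u <= Lk a k u + Lk a k (1 - u).
Proof.
move=> ha /andP[p0 p1] hu; rewrite /Kf.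
have h1 := Lk_ge0 ha k hu.
have hu' : 0 < 1 - u < 1 by case/andP: hu => u0 u1; apply/andP; split; lra.
have h2 := Lk_ge0 ha k hu'.
apply: lerD.
  by rewrite ler_piMl.
by rewrite ler_piMl// ?lerBlDr ?lerDl// subr_ge0.
Qed.

Lemma mtarget (R : realType) (a : R) k : measurable_fun [set: R] (target a k).
Proof.
case: k; rewrite /target /s_alpha /=; try exact: measurable_id.
by apply: measurable_funD => //; apply: measurable_funM.
Qed.

End Helpers.
Import Helpers.

Theorem corollary1 (R : realType) (dO : measure_display) (Omega : measurableType dO)
  (P : probability Omega R) (d : nat)
  (X : {mfun Omega >-> d.-tuple R}) (Y : Omega -> R)
  (mY : measurable_fun [set: Omega] Y)
  (Ypm : forall w, Y w = 1 \/ Y w = -1)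
  (p1 : d.-tuple R -> R) (mp1 : measurable_fun [set: d.-tuple R] p1)
  (p1_cond : forall A : set (d.-tuple R), measurable A ->
     P (X @^-1` A `&` Y @^-1` [set 1]) =
     (\int[distribution P X]_(x in A) (p1 x)%:E)%E)
  (alpha : R) (halpha : 0 <= alpha < 1) (k : loss_kind)
  (gbar : d.-tuple R -> R) (mgbar : measurable_fun [set: d.-tuple R] gbar)
  (gbar_min : forall g : d.-tuple R -> R, measurable_fun [set: d.-tuple R] g ->
     (\int[P]_w (loss alpha k (Y w * gbar (X w)))%:E <=
      \int[P]_w (loss alpha k (Y w * g (X w)))%:E)%E) :
  {ae distribution P X, forall x, recovered alpha k (gbar x) = p1 x}.
Proof.
set PX := distribution P X.
have mX : measurable_fun [set: Omega] X := measurable_funPT X.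
set E1 := Y @^-1` [set 1].
set E2 := Y @^-1` [set -1].
have mE1 : measurable E1 by rewrite -[E1]setTI; apply: mY => //; exact: measurable_set1.
have mE2 : measurable E2 by rewrite -[E2]setTI; apply: mY => //; exact: measurable_set1.
have mXA A : measurable A -> measurable (X @^-1` A).
  by move=> mA; rewrite -[X @^-1` A]setTI; exact: mX.
have PXfin A : measurable A -> (PX A \is a fin_num)%E.
  move=> mA; rewrite ge0_fin_numE ?measure_ge0//.
  by rewrite (le_lt_trans (probability_le1 _ mA))// ltry.
have mp1E : measurable_fun [set: d.-tuple R] (fun x => (p1 x)%:E).
  exact/measurable_EFinP.
have ae0 : {ae PX, forall x, 0 <= p1 x}.
  set N := p1 @^-1` `]-oo, 0[.
  have mN : measurable N by rewrite -[N]setTI; apply: mp1 => //; exact: measurable_itv.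
  have hN := p1_cond N mN.
  have i0 : (\int[PX]_(x in N) (p1 x)%:E = - \int[PX]_(x in N) `|(p1 x)%:E|)%E.
    rewrite -integral_ge0N; last by move=> x _; exact: abse_ge0.
    apply: eq_integral => x; rewrite inE /N /= in_itv /= => px.
    by rewrite ltr0_norm ?opprK.
  have z : (\int[PX]_(x in N) `|(p1 x)%:E| = 0)%E.
    apply/eqP; rewrite eq_le integral_ge0 ?andbT; last by move=> *; exact: abse_ge0.
    by rewrite -oppe_ge0 -i0 -hN measure_ge0.
  have := (@ae_eq_integral_abs _ _ _ PX N mN (fun x => (p1 x)%:E) (measurable_funTS mp1E)).1 z.
  apply: filterS => x h; rewrite leNgt; apply/negP => px.
  have : N x by rewrite /N /= in_itv /=.
  by move/h => [] /eqP; rewrite lt_eqF.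
have ae1 : {ae PX, forall x, p1 x <= 1}.
  set N := p1 @^-1` `]1, +oo[.
  have mN : measurable N by rewrite -[N]setTI; apply: mp1 => //; exact: measurable_itv.
  have hN := p1_cond N mN.
  have mB : measurable_fun N (fun x => (p1 x - 1)%:E).
    apply/measurable_EFinP/measurable_funTS/measurable_funB => //.
  have i0 : (\int[PX]_(x in N) (p1 x)%:E =
      \int[PX]_(x in N) (p1 x - 1)%:E + PX N)%E.
    rewrite -[in RHS](mul1e (PX N)) -integral_cst// -ge0_integralD//.
    - by apply: eq_integral => x _ /=; rewrite -EFinD subrK.
    - by move=> x; rewrite /N /= in_itv /= andbT lee_fin subr_ge0 => /ltW.
  have le : (P (X @^-1` N `&` E1) <= PX N)%E.
    by rewrite measureIl//; exact: mXA.
  have z : (\int[PX]_(x in N) `|(p1 x - 1)%:E| = 0)%E.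
    have e : (\int[PX]_(x in N) `|(p1 x - 1)%:E| = \int[PX]_(x in N) (p1 x - 1)%:E)%E.
      apply: eq_integral => x; rewrite inE /N /= in_itv /= andbT => px.
      by rewrite ger0_norm// subr_ge0 ltW.
    rewrite e; apply/eqP; rewrite eq_le integral_ge0 ?andbT; last first.
      by move=> x; rewrite /N /= in_itv /= andbT lee_fin subr_ge0 => /ltW.
    rewrite -(leeD2rE _ _ (PXfin _ mN)) add0e -i0 -hN; exact: le.
  have := (@ae_eq_integral_abs _ _ _ PX N mN _ mB).1 z.
  apply: filterS => x h; rewrite leNgt; apply/negP => px.
  have : N x by rewrite /N /= in_itv /= andbT.
  by move/h => [] /eqP; rewrite subr_eq0 gt_eqF.
pose q x := Num.min (Num.max (p1 x) 0) 1.
have mq : measurable_fun [set: d.-tuple R] q.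
  by apply: measurable_minr => //; apply: measurable_maxr.
have q01 x : 0 <= q x <= 1.
  rewrite /q; apply/andP; split.
    by rewrite le_min ler01 le_max lexx orbT.
  by rewrite ge_min lexx orbT.
have qp1 : {ae PX, forall x, q x = p1 x}.
  apply: filterS2 ae0 ae1 => x h0 h1.
  by rewrite /q max_l// min_l.
have mqE : measurable_fun [set: d.-tuple R] (fun x => (q x)%:E).
  exact/measurable_EFinP.
have H1 A : measurable A -> P (X @^-1` A `&` E1) = (\int[PX]_(x in A) (q x)%:E)%E.
  move=> mA; rewrite p1_cond//; apply: ae_eq_integral => //.
  - exact: measurable_funTS.
  - exact: measurable_funTS.
  - by apply: filterS qp1 => x h _; rewrite h.
have H2 A : measurable A -> P (X @^-1` A `&` E2) = (\int[PX]_(x in A) (1 - q x)%:E)%E.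
  move=> mA.
  have U : X @^-1` A = (X @^-1` A `&` E1) `|` (X @^-1` A `&` E2).
    rewrite -setIUr (_ : E1 `|` E2 = setT) ?setIT//.
    by apply/seteqP; split => // w _; case: (Ypm w) => h; [left|right].
  have D : (X @^-1` A `&` E1) `&` (X @^-1` A `&` E2) = set0.
    apply/seteqP; split => // w [[_ h1] [_ h2]].
    move: h1 h2; rewrite /E1 /E2 /= => -> h2.
    by move: h2; lra.
  have e1 : PX A = (P (X @^-1` A `&` E1) + P (X @^-1` A `&` E2))%E.
    rewrite /PX /distribution /pushforward {1}U measureU//.
    - by apply: measurableI => //; exact: mXA.
    - by apply: measurableI => //; exact: mXA.
  have e2 : PX A = (\int[PX]_(x in A) (q x)%:E + \int[PX]_(x in A) (1 - q x)%:E)%E.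
    rewrite -ge0_integralD//.
    - rewrite -[LHS]mul1e -integral_cst//; apply: eq_integral => x _.
      by rewrite -EFinD addrC subrK.
    - by move=> x _; rewrite lee_fin; case/andP: (q01 x).
    - exact: measurable_funTS.
    - by move=> x _; rewrite lee_fin subr_ge0; case/andP: (q01 x).
    - by apply/measurable_EFinP/measurable_funTS/measurable_funB.
  have fin : (P (X @^-1` A `&` E1) \is a fin_num)%E.
    rewrite ge0_fin_numE ?measure_ge0//.
    apply: (le_lt_trans (probability_le1 _ _)); last exact: ltry.
    by apply: measurableI => //; exact: mXA.
  move: e1; rewrite e2 -H1// => /(congr1 (fun z => z - P (X @^-1` A `&` E1))%E).
  by rewrite ![(P (X @^-1` A `&` E1) + _)%E]addeC !addeK.
have ET : E1 `|` E2 = [set: Omega].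
  by apply/seteqP; split => // w _; case: (Ypm w) => h; [left|right].
have D12 : [disjoint E1 & E2].
  rewrite disj_set2E; apply/eqP/seteqP; split => // w [h1 h2].
  by move: h1 h2; rewrite /E1 /E2 /= => -> h2; move: h2; lra.
have mloss' := mloss alpha k.
have loss0 v : (0 <= loss alpha k v).
  by rewrite loss_sig Lk_ge0// sig_gt0 sig_lt1.
have q0 x : 0 <= q x by case/andP: (q01 x).
have q1 x : 0 <= 1 - q x by rewrite subr_ge0; case/andP: (q01 x).
have m1q : measurable_fun [set: d.-tuple R] (fun x => 1 - q x) by exact: measurable_funB.
have risk g : measurable_fun [set: d.-tuple R] g ->
  (\int[P]_w (loss alpha k (Y w * g (X w)))%:E =
   \int[PX]_x (Kf alpha k (q x) (sigmoid (g x)))%:E)%E.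
  move=> mg.
  have mgX : measurable_fun [set: Omega] (fun w => g (X w)) by exact: measurableT_comp mg mX.
  have mF : measurable_fun [set: Omega] (fun w => (loss alpha k (Y w * g (X w)))%:E).
    by apply/measurable_EFinP; apply: measurableT_comp mloss' _; exact: measurable_funM.
  rewrite -ET ge0_integral_setU//; last 2 first.
    by rewrite ET.
    by move=> w _; rewrite lee_fin.
  have -> : (\int[P]_(w in E1) (loss alpha k (Y w * g (X w)))%:E =
      \int[P]_(w in E1) (fun x => (loss alpha k (g x))%:E) (X w))%E.
    by apply: eq_integral => w; rewrite inE /E1 /= => ->; rewrite mul1r.
  have -> : (\int[P]_(w in E2) (loss alpha k (Y w * g (X w)))%:E =
      \int[P]_(w in E2) (fun x => (loss alpha k (- g x))%:E) (X w))%E.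
    by apply: eq_integral => w; rewrite inE /E2 /= => ->; rewrite mulN1r.
  have mf1 : measurable_fun [set: d.-tuple R] (fun x => (loss alpha k (g x))%:E).
    by apply/measurable_EFinP; exact: measurableT_comp mloss' mg.
  have mf2 : measurable_fun [set: d.-tuple R] (fun x => (loss alpha k (- g x))%:E).
    by apply/measurable_EFinP; apply: measurableT_comp mloss' _; exact: measurable_funN.
  rewrite (dens mX mE1 mq q0 H1 mf1) ?(dens mX mE2 m1q q1 H2 mf2); last 2 first.
    by move=> x; rewrite lee_fin.
    by move=> x; rewrite lee_fin.
  rewrite -ge0_integralD//; last 4 first.
  - by move=> x _; rewrite -EFinM lee_fin mulr_ge0.
  - by apply: emeasurable_funM => //; exact/measurable_EFinP.
  - by move=> x _; rewrite -EFinM lee_fin mulr_ge0.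
  - by apply: emeasurable_funM => //; exact/measurable_EFinP.
  apply: eq_integral => x _; rewrite -!EFinM -EFinD loss_sig loss_sigN /Kf.
  by congr EFin; ring.
pose u x := sigmoid (gbar x).
have hu x : 0 < u x < 1 by rewrite /u sig_gt0 sig_lt1.
have mu_ : measurable_fun [set: d.-tuple R] u.
  exact: measurableT_comp (nondecreasing_measurable measurableT (@sig_nd R)) mgbar.
pose mi x := mid alpha k (q x) (u x).
have mmi : measurable_fun [set: d.-tuple R] mi.
  rewrite /mi /mid; apply: measurable_funM => //; apply: measurable_funD => //.
  by apply: measurableT_comp; [exact: mtarget | exact: mq].
pose g' x := logit (mi x).
have imp x := K_improve halpha k (q01 x) (hu x).
have mg' : measurable_fun [set: d.-tuple R] g'.
  rewrite /g' /logit; apply: measurable_funB.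
    exact: measurableT_comp mmi.
  by apply: measurableT_comp => //; exact: measurable_funB.
have sg' x : sigmoid (g' x) = mi x.
  by rewrite /g' sig_logit//; case: (imp x).
pose r x := Kf alpha k (q x) (u x).
pose r' x := Kf alpha k (q x) (mi x).
have r0 x : 0 <= r x by apply: Kf_ge0.
have r'0 x : 0 <= r' x by apply: Kf_ge0 => //; case: (imp x).
have mr : measurable_fun [set: d.-tuple R] r by exact: mKf.
have mr' : measurable_fun [set: d.-tuple R] r' by exact: mKf.
have le1 : (\int[PX]_x (r x)%:E <= \int[PX]_x (r' x)%:E)%E.
  have := gbar_min g' mg'; rewrite !risk//.
  by under [X in (_ <= X)%E -> _]eq_integral do rewrite sg'.
have le2 : (\int[PX]_x (r' x)%:E <= \int[PX]_x (r x)%:E)%E.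
  apply: ge0_le_integral => //.
  - by move=> x _; rewrite lee_fin.
  - exact/measurable_EFinP.
  - exact/measurable_EFinP.
  - by move=> x _; rewrite lee_fin; case: (imp x).
pose c := Lk alpha k (sigmoid 0) + Lk alpha k (1 - sigmoid 0).
have le3 : (\int[PX]_x (r x)%:E <= c%:E)%E.
  have mc : measurable_fun [set: d.-tuple R] (cst (0:R)) by [].
  have := gbar_min (cst 0) mc; rewrite !risk//.
  move/le_trans; apply.
  rewrite -[leRHS]mule1 -(probability_setT PX) -integral_cst//.
  apply: ge0_le_integral => //.
  - by move=> x _; rewrite lee_fin Kf_ge0// sig_gt0 sig_lt1.
  - by apply/measurable_EFinP; apply: (mKf alpha k mq); apply: measurableT_comp; [exact: nondecreasing_measurable measurableT (@sig_nd R) | exact: mc].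
  - by move=> x _; rewrite lee_fin Kf_le// sig_gt0 sig_lt1.
have finr' : (\int[PX]_x (r' x)%:E \is a fin_num)%E.
  rewrite ge0_fin_numE ?integral_ge0//; last by move=> x _; rewrite lee_fin.
  by rewrite (le_lt_trans le2)// (le_lt_trans le3)// ltry.
pose D x := r x - r' x.
have D0 x : 0 <= D x by rewrite /D subr_ge0; case: (imp x).
have mD : measurable_fun [set: d.-tuple R] D by exact: measurable_funB.
have eD : (\int[PX]_x (r x)%:E = \int[PX]_x (D x)%:E + \int[PX]_x (r' x)%:E)%E.
  rewrite -ge0_integralD//; last 4 first.
  - by move=> x _; rewrite lee_fin.
  - exact/measurable_EFinP.
  - by move=> x _; rewrite lee_fin.
  - exact/measurable_EFinP.
  by apply: eq_integral => x _; rewrite -EFinD /D subrK.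
have z : (\int[PX]_x `|(D x)%:E| = 0)%E.
  have -> : (\int[PX]_x `|(D x)%:E| = \int[PX]_x (D x)%:E)%E.
    by apply: eq_integral => x _; rewrite gee0_abs// lee_fin.
  apply/eqP; rewrite eq_le integral_ge0 ?andbT; last by move=> x _; rewrite lee_fin.
  by rewrite -(leeD2rE _ _ finr') add0e -eD.
have mDE : measurable_fun [set: d.-tuple R] (fun x => (D x)%:E) by exact/measurable_EFinP.
have := (@ae_eq_integral_abs _ _ _ PX setT measurableT (fun x => (D x)%:E) mDE).1 z.
move=> h; apply: filterS2 h qp1 => x h qx.
rewrite -qx; apply/eqP; rewrite recovered_eq//; apply/negPn/negP => ne.
have [_ _ /(_ ne) lt] := imp x.
have := h I => -[] /eqP; rewrite /D subr_eq0 => /eqP e.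
by move: lt; rewrite -/(r' x) -/(u x) -/(r x) e ltxx.
Qed.
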